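(* Consider the gamblet setting and the multigrid iteration $\operatorname{MG}$ described in the context, and assume the approximation and condition-number estimates (i)–(ii) of the context hold with constants $C>0$, $H\in(0,1)$. Take $p=1$ and $m_1=m_2=m/2$. Then for every $\theta\in(0,1)$ there exists $m$, independent of the level $k$, such that for every $k\in\{1,\dots,q\}$, every $g\in\mathbb R^{\mathcal I^{(k)}}$ and every initial guess $z_0\in\mathbb R^{\mathcal I^{(k)}}$, the solution $z$ of $A^{(k)}z=g$ satisfies $$\|z-\operatorname{MG}(k,z_0,g)\|_{A^{(k)}}\le\theta\,\|z-z_0\|_{A^{(k)}},$$ where $\|x\|_{A^{(k)}}^2:=x^TA^{(k)}x$.
   Context: Let $V\subset V_0\subset V^*$ be real Hilbert spaces forming a Gelfand triple: $V^*$ is the dual of $V$, the duality pairing $[\cdot,\cdot]$ between $V^*$ and $V$ extends the inner product $\langle\cdot,\cdot\rangle_0$ of $V_0$ (norm $\|\cdot\|_0$), and the embedding $V_0\to V^*$ is compact and dense. Let $\mathcal L:V\to V^*$ be a symmetric positive linear bijection; $\langle u,w\rangle:=[\mathcal Lu,w]$ is the energy inner product on $V$, with norm $\|u\|^2=\langle u,u\rangle$. Gamblets: let $\mathcal I^{(1)},\dots,\mathcal I^{(q)}$ be finite index sets and, for each $k$, let $(\phi_i^{(k)})_{i\in\mathcal I^{(k)}}$ be linearly independent elements of $V_0$ with uniformly well-conditioned mass matrices, $C^{-1}|x|^2\le\|\sum_ix_i\phi_i^{(k)}\|_0^2\le C|x|^2$ for all $x$ and $k$, nested via $\phi_i^{(k)}=\sum_{j\in\mathcal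 I^{(k+1)}}\pi^{(k,k+1)}_{ij}\phi_j^{(k+1)}$ where $\pi^{(k,k+1)}$ has full rank $|\mathcal I^{(k)}|$ and $\pi^{(k,k+1)}\pi^{(k+1,k)}=I$, $\pi^{(k+1,k)}:=(\pi^{(k,k+1)})^T$. Let $\Theta^{(k)}_{ij}:=[\phi_i^{(k)},\mathcal L^{-1}\phi_j^{(k)}]$, $A^{(k)}:=(\Theta^{(k)})^{-1}$, $\psi_i^{(k)}:=\sum_jA^{(k)}_{ij}\mathcal L^{-1}\phi_j^{(k)}$, $\mathfrak V^{(k)}:=\operatorname{span}\{\psi_i^{(k)}\}$; then $A^{(k)}_{ij}=\langle\psi_i^{(k)},\psi_j^{(k)}\rangle$ and $u^{(k)}:=\sum_i[\phi_i^{(k)},u]\psi_i^{(k)}$ is the $\langle\cdot,\cdot\rangle$-orthogonal projection of $u\in V$ onto $\mathfrak V^{(k)}$. Interpolation matrices: $R^{(k-1,k)}:=A^{(k-1)}\pi^{(k-1,k)}\Theta^{(k)}$ (so $\psi_i^{(k-1)}=\sum_jR^{(k-1,k)}_{ij}\psi_j^{(k)}$), $R^{(k,k-1)}:=(R^{(k-1,k)})^T$. For $k\ge2$ let $W^{(k)}$ be a $\mathcal J^{(k)}\times\mathcal I^{(k)}$ matrix with $|\mathcal J^{(k)}|=|\mathcal I^{(k)}|-|\mathcal I^{(k-1)}|$, $\operatorname{Ker}(\pi^{(k-1,k)})=\operatorname{Im}(W^{(k),T})$, $W^{(k)}W^{(k),T}=I$, and $B^{(k)}:=W^{(k)}A^{(k)}W^{(k),T}$;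 $B^{(1)}:=A^{(1)}$. Assumed estimates (for constants $C>0$, $H\in(0,1)$, all $k$): (i) $\|u-u^{(k)}\|_0\le CH^k\|u-u^{(k)}\|$ for $u\in V$, and $\|u-u^{(k)}\|\le CH^k\|\mathcal Lu\|_0$ whenever $\mathcal Lu\in V_0$; (ii) $C^{-1}H^{-2(k-1)}I\le B^{(k)}\le CH^{-2k}I$, $\operatorname{Cond}(B^{(k)})\le CH^{-2}$, and $C^{-1}I\le A^{(k)}\le CH^{-2k}I$. Multigrid iteration $\operatorname{MG}(k,z_0,g)$ for $A^{(k)}z=g$ (nonnegative integers $m_1,m_2$, $p\in\{1,2\}$, $\Lambda^{(k)}:=CH^{-2k}$): for $k=1$ it is the exact solution of $A^{(1)}x=g$. For $k>1$: (1) presmoothing $z_\ell=z_{\ell-1}+\frac1{\Lambda^{(k)}}(g-A^{(k)}z_{\ell-1})$, $1\le\ell\le m_1$; (2) correction: $g^{(k-1)}:=R^{(k-1,k)}(g-A^{(k)}z_{m_1})$, $q_0:=0$, $q_i:=\operatorname{MG}(k-1,q_{i-1},g^{(k-1)})$ for $1\le i\le p$, and $z_{m_1+1}:=z_{m_1}+R^{(k,k-1)}q_p$; (3) postsmoothing $z_\ell=z_{\ell-1}+\frac1{\Lambda^{(k)}}(g-A^{(k)}z_{\ell-1})$ for $m_1+2\le\ell\le m_1+m_2+1$; output $\operatorname{MG}(k,z_0,g):=z_{m_1+m_2+1}$. *)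

(* Defs.v *)
From HB Require Import structures.
From mathcomp Require Import all_boot all_order all_algebra.
From mathcomp Require Import boolp classical_sets reals.
Unset Implicit Arguments. Unset Strict Implicit. Unset Printing Implicit Defensive.
Import Order.TTheory GRing.Theory Num.Theory.
Local Open Scope ring_scope.
Local Open Scope classical_set_scope.

Section Gamblets.
Variable R : realType.

Definition sqnorm (m : nat) (x : 'cV[R]_m) : R := \sum_i x i 0 ^+ 2.

Definition qform (m : nat) (M : 'M[R]_m) (x : 'cV[R]_m) : R := (x^T *m M *m x) 0 0.

Definition Anorm (m : nat) (M : 'M[R]_m) (x : 'cV[R]_m) : R := Num.sqrt (qform m M x).

Definition loewner_ge (m : nat) (M : 'M[R]_m) (a : R) := forall x : 'cV[R]_m, a * sqnorm m x <= qform m M x.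
Definition loewner_le (m : nat) (M : 'M[R]_m) (b : R) := forall x : 'cV[R]_m, qform m M x <= b * sqnorm m x.

Definition lambda_max (m : nat) (M : 'M[R]_m) : R :=
  sup [set qform m M x | x in [set x : 'cV[R]_m | sqnorm m x = 1]].
Definition lambda_min (m : nat) (M : 'M[R]_m) : R :=
  inf [set qform m M x | x in [set x : 'cV[R]_m | sqnorm m x = 1]].
Definition Cond (m : nat) (M : 'M[R]_m) : R := lambda_max m M / lambda_min m M.

(** Gelfand-triple data:  iV : V -> V0,  i0 : V0 -> V*,  inner product ip0 on V0,
    duality pairing dual : V* -> V -> R,  Linv = L^{-1} : V* -> V. *)
Variables (V V0 Vs : lmodType R).
Variables (iV : V -> V0) (i0 : V0 -> Vs).
Variable ip0 : V0 -> V0 -> R.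
Variable dual : Vs -> V -> R.
Variables (L : V -> Vs) (Linv : Vs -> V).

Definition norm0 (x : V0) : R := Num.sqrt (ip0 x x).
Definition eip (u w : V) : R := dual (L u) w.
Definition enorm (u : V) : R := Num.sqrt (eip u u).

(** Gamblet data: n k = |I^(k)|, phi k i = phi_i^(k). *)
Variable n : nat -> nat.
Variable phi : forall k, 'I_(n k) -> V0.

Definition Theta (k : nat) : 'M[R]_(n k) :=
  \matrix_(i, j) dual (i0 (phi k i)) (Linv (i0 (phi k j))).
Definition Amat (k : nat) : 'M[R]_(n k) := invmx (Theta k).
Definition psi (k : nat) (i : 'I_(n k)) : V :=
  \sum_j Amat k i j *: Linv (i0 (phi k j)).
Definition uproj (k : nat) (u : V) : V :=
  \sum_i dual (i0 (phi k i)) u *: psi k i.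

(** pi k : the matrix pi^(k-1,k), of size |I^(k-1)| x |I^(k)|. *)
Variable pi : forall k, 'M[R]_(n k.-1, n k).
Definition Rmat (k : nat) : 'M[R]_(n k.-1, n k) := Amat k.-1 *m pi k *m Theta k.

Variable W : forall k, 'M[R]_(n k - n k.-1, n k).
Definition Bmat (k : nat) : 'M[R]_(n k - n k.-1) := W k *m Amat k *m (W k)^T.

End Gamblets.

Section Multigrid.
Variable R : realType.
Variable n : nat -> nat.
Variable A : forall k, 'M[R]_(n k).
Variable Rm : forall k, 'M[R]_(n k.-1, n k).
Variable Lam : nat -> R.
Variables (m1 m2 p : nat).

Definition smooth (k : nat) (j : nat) (g z : 'cV[R]_(n k)) : 'cV[R]_(n k) :=
  iter j (fun z => z + (Lam k)^-1 *: (g - A k *m z)) z.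

(** MG(k, z0, g); level 0 is never reached from k >= 1 and is a dummy. *)
Fixpoint MG (k : nat) : 'cV[R]_(n k) -> 'cV[R]_(n k) -> 'cV[R]_(n k) :=
  match k with
  | 0 => fun z0 _ => z0
  | k'.+1 => fun z0 g =>
      if k' == 0%N then invmx (A k'.+1) *m g
      else
        let z1 := smooth k'.+1 m1 g z0 in
        let g' := Rm k'.+1 *m (g - A k'.+1 *m z1) in
        let qp := iter p (fun q => MG k' q g') 0 in
        let z2 := z1 + (Rm k'.+1)^T *m qp in
        smooth k'.+1 m2 g z2
  end.

End Multigrid.

(* Main.v *)
Require Import Defs.
From HB Require Import structures.
From mathcomp Require Import all_boot all_order all_algebra.
From mathcomp Require Import boolp classical_sets reals.
From mathcomp Require Import ring lra.
Import Order.TTheory GRing.Theory Num.Theory.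
Local Open Scope ring_scope.
Set Implicit Arguments. Unset Strict Implicit.
Section Mat.
Variable R : realType.

Definition dot (N : nat) (x y : 'cV[R]_N) : R := (x^T *m y) 0 0.

Lemma dotE N (x y : 'cV[R]_N) : dot x y = \sum_i x i 0 * y i 0.
Proof. by rewrite /dot !mxE; apply: eq_bigr => i _; rewrite !mxE. Qed.

Lemma dotC N (x y : 'cV[R]_N) : dot x y = dot y x.
Proof. by rewrite !dotE; apply: eq_bigr => i _; rewrite mulrC. Qed.

Lemma dotDr N (x y z : 'cV[R]_N) : dot x (y + z) = dot x y + dot x z.
Proof. by rewrite !dotE -big_split; apply: eq_bigr => i _; rewrite !mxE mulrDr. Qed.

Lemma dotZr N a (x y : 'cV[R]_N) : dot x (a *: y) = a * dot x y.
Proof. by rewrite !dotE mulr_sumr; apply: eq_bigr => i _; rewrite !mxE mulrCA. Qed.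

Lemma dotNr N (x y : 'cV[R]_N) : dot x (- y) = - dot x y.
Proof. by rewrite -scaleN1r dotZr mulN1r. Qed.

Lemma dotBr N (x y z : 'cV[R]_N) : dot x (y - z) = dot x y - dot x z.
Proof. by rewrite dotDr dotNr. Qed.

Lemma dotDl N (x y z : 'cV[R]_N) : dot (y + z) x = dot y x + dot z x.
Proof. by rewrite dotC dotDr !(dotC x). Qed.
Lemma dotZl N a (x y : 'cV[R]_N) : dot (a *: y) x = a * dot y x.
Proof. by rewrite dotC dotZr dotC. Qed.
Lemma dotBl N (x y z : 'cV[R]_N) : dot (y - z) x = dot y x - dot z x.
Proof. by rewrite dotC dotBr !(dotC x). Qed.
Lemma dot0r N (x : 'cV[R]_N) : dot x 0 = 0.
Proof. by rewrite dotE big1 // => i _; rewrite mxE mulr0. Qed.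

Lemma dotM N M (x : 'cV[R]_M) (A : 'M[R]_(M, N)) (y : 'cV[R]_N) :
  dot x (A *m y) = dot (A^T *m x) y.
Proof. by rewrite /dot trmx_mul trmxK mulmxA. Qed.

Lemma sqnormE N (x : 'cV[R]_N) : sqnorm R N x = dot x x.
Proof. by rewrite /sqnorm dotE; apply: eq_bigr => i _; rewrite expr2. Qed.

Lemma qformE N (A : 'M[R]_N) x : qform R N A x = dot x (A *m x).
Proof. by rewrite /qform /dot mulmxA. Qed.

Lemma sqnorm_ge0 N (x : 'cV[R]_N) : 0 <= sqnorm R N x.
Proof. by apply: sumr_ge0 => i _; rewrite sqr_ge0. Qed.

Lemma dot_ge0 N (x : 'cV[R]_N) : 0 <= dot x x.
Proof. by rewrite -sqnormE sqnorm_ge0. Qed.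

Lemma sqnorm_gt0 N (x : 'cV[R]_N) : x != 0 -> 0 < sqnorm R N x.
Proof.
move=> nx; rewrite lt_def sqnorm_ge0 andbT; apply: contra nx => /eqP.
rewrite /sqnorm => /psumr_eq0P H0; apply/eqP/matrixP => i j.
rewrite (ord1 j) mxE; apply/eqP; rewrite -sqrf_eq0; apply/eqP; apply: H0 => // k _.
exact: sqr_ge0.
Qed.

End Mat.
Set Implicit Arguments. Unset Strict Implicit.

Section Smooth.
Variable R : realType.
Variable N : nat.
Variable A : 'M[R]_N.
Variable Lam : R.
Hypothesis Lam_gt0 : 0 < Lam.
Hypothesis Asym : A^T = A.
Hypothesis Ale : forall x, qform R N A x <= Lam * sqnorm R N x.
Hypothesis Age : forall x, 0 <= qform R N A x.

Definition Sm (w : 'cV[R]_N) := w - Lam^-1 *: (A *m w).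

Lemma dotA (x y : 'cV[R]_N) : dot x (A *m y) = dot (A *m x) y.
Proof. by rewrite dotM Asym. Qed.

Lemma ASm w : A *m Sm w = A *m w - Lam^-1 *: (A *m (A *m w)).
Proof. by rewrite /Sm mulmxBr -scalemxAr. Qed.

Lemma smooth_q w : qform R N A (Sm w) <= qform R N A w - dot (A *m w) (A *m w) / Lam.
Proof.
have hQ := Ale (A *m w); rewrite qformE sqnormE in hQ; rewrite !qformE.
rewrite ASm /Sm.
set y := A *m w; set t := Lam^-1.
rewrite dotBl dotBr dotBr dotZl dotZl dotZr dotZr.
have e1 : dot w (t *: (A *m y)) = t * dot y y by rewrite dotZr dotA.
have ht : Lam * t = 1 by rewrite /t mulfV // gt_eqF.
have ht0 : 0 < t by rewrite /t invr_gt0.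
have : t * t * dot y (A *m y) <= t * t * (Lam * dot y y).
  by apply: ler_wpM2l => //; rewrite mulr_ge0 // ltW.
rewrite -/t => hh.
have e : t * t * (Lam * dot y y) = t * dot y y.
  by transitivity (t * (Lam * t) * dot y y); [ring | rewrite ht mulr1].
rewrite (dotA w y) -/y. lra.
Qed.

Lemma smooth_n w : dot (A *m Sm w) (A *m Sm w) <= dot (A *m w) (A *m w).
Proof.
rewrite ASm; set y := A *m w; set t := Lam^-1.
have ht : Lam * t = 1 by rewrite /t mulfV // gt_eqF.
have ht0 : 0 < t by rewrite /t invr_gt0.
have hP : 0 <= dot y (A *m y) by rewrite -qformE.
have h1 := Age (Lam *: y - A *m y).
have h2 := Ale (A *m y).
rewrite !qformE in h1 h2; rewrite sqnormE in h2.
rewrite mulmxBr -scalemxAr dotBl !dotBr !dotZl !dotZr in h1.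
rewrite (dotA y (A *m y)) in h1.
have hD : dot (A *m y) (A *m y) <= Lam * dot y (A *m y) by nra.
rewrite dotBl !dotBr !dotZl !dotZr.
rewrite (dotC (A *m y) y).
have : t * t * dot (A *m y) (A *m y) <= t * t * (Lam * dot y (A *m y)).
  by apply: ler_wpM2l => //; rewrite mulr_ge0 // ltW.
have e : t * t * (Lam * dot y (A *m y)) = t * dot y (A *m y).
  by transitivity (t * (Lam * t) * dot y (A *m y)); [ring | rewrite ht mulr1].
have tP : 0 <= t * dot y (A *m y) by rewrite mulr_ge0 // ltW.
lra.
Qed.

End Smooth.

Section Iter.
Variable R : realType.
Variable N : nat.
Variable A : 'M[R]_N.
Variable Lam : R.
Hypothesis Lam_gt0 : 0 < Lam.
Hypothesis Asym : A^T = A.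
Hypothesis Ale : forall x, qform R N A x <= Lam * sqnorm R N x.
Hypothesis Age : forall x, 0 <= qform R N A x.

Lemma smooth_iter m e :
  m%:R * (dot (A *m iter m (Sm A Lam) e) (A *m iter m (Sm A Lam) e) / Lam)
  <= qform R N A e - qform R N A (iter m (Sm A Lam) e).
Proof.
elim: m => [|m IH]; first by rewrite mul0r subrr.
rewrite iterS.
set v := iter m (Sm A Lam) e in IH *.
have h1 := smooth_q Lam_gt0 Asym Ale v.
have h2 := smooth_n Lam_gt0 Asym Ale Age v.
have h3 : dot (A *m Sm A Lam v) (A *m Sm A Lam v) / Lam <= dot (A *m v) (A *m v) / Lam.
  by rewrite ler_pM2r ?invr_gt0.
have h4 : 0 <= dot (A *m Sm A Lam v) (A *m Sm A Lam v) / Lam.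
  by rewrite divr_ge0 ?dot_ge0 // ltW.
have h5 : m%:R * (dot (A *m Sm A Lam v) (A *m Sm A Lam v) / Lam) <= m%:R * (dot (A *m v) (A *m v) / Lam).
  by rewrite ler_wpM2l.
rewrite -addn1 natrD mulrDl mul1r.
lra.
Qed.

Lemma smooth_iter_le m e : qform R N A (iter m (Sm A Lam) e) <= qform R N A e.
Proof.
have := smooth_iter m e.
have : 0 <= m%:R * (dot (A *m iter m (Sm A Lam) e) (A *m iter m (Sm A Lam) e) / Lam).
  by rewrite mulr_ge0 // divr_ge0 ?dot_ge0 // ltW.
lra.
Qed.
End Iter.
Set Implicit Arguments. Unset Strict Implicit.

Section Coarse.
Variable R : realType.
Variables N Nc Nw : nat.
Variable A : 'M[R]_N.
Variable Ac : 'M[R]_Nc.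
Variable Rr P : 'M[R]_(Nc, N).
Variable Wm : 'M[R]_(Nw, N).
Variable lam th2 : R.
Hypothesis lam_gt0 : 0 < lam.
Hypothesis th2_le1 : th2 <= 1.
Hypothesis Asym : A^T = A.
Hypothesis Acu : Ac \in unitmx.
Hypothesis Gal : Rr *m A *m Rr^T = Ac.
Hypothesis RA : Rr *m A = Ac *m P.
Hypothesis Ker : forall x : 'cV[R]_N, P *m x = 0 -> exists y, x = Wm^T *m y.
Hypothesis WW : Wm *m Wm^T = 1%:M.
Hypothesis Bge : forall b, lam * sqnorm R Nw b <= qform R Nw (Wm *m A *m Wm^T) b.

Lemma coarse_step v qp :
  let c := invmx Ac *m (Rr *m (A *m v)) in
  qform R Nc Ac (c - qp) <= th2 * qform R Nc Ac c ->
  qform R N A (v - Rr^T *m qp) <= th2 * qform R N A v + (1 - th2) * (dot (A *m v) (A *m v) / lam).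
Proof.
move=> c hq.
set r := v - Rr^T *m c.
have hRAr : Rr *m (A *m r) = 0.
  rewrite /r !mulmxBr !mulmxA Gal /c mulmxV // mul1mx.
  by rewrite subrr.
have orth : forall y, dot (Rr^T *m y) (A *m r) = 0.
  by move=> y; rewrite -dotM hRAr dot0r.
have orth' : forall y, dot r (A *m (Rr^T *m y)) = 0.
  by move=> y; rewrite (dotA Asym) dotC orth.
have qR : forall y, dot (Rr^T *m y) (A *m (Rr^T *m y)) = qform R Nc Ac y.
  by move=> y; rewrite qformE -dotM !mulmxA Gal.
have split : forall y, qform R N A (r + Rr^T *m y) = qform R N A r + qform R Nc Ac y.
  move=> y; rewrite !qformE mulmxDr dotDl !dotDr orth orth' qR qformE.
  by rewrite addr0 add0r.
have ev : v = r + Rr^T *m c by rewrite /r subrK.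
have e2 : v - Rr^T *m qp = r + Rr^T *m (c - qp).
  by rewrite {1}ev mulmxBr addrA.
have hPr : P *m r = 0.
  have : Ac *m (P *m r) = 0 by rewrite mulmxA -RA -mulmxA hRAr.
  by move=> h; rewrite -(mulKmx Acu (P *m r)) h mulmx0.
have [b hb] := Ker hPr.
have hs : qform R N A r = dot r (A *m v).
  by rewrite qformE ev mulmxDr dotDr orth' addr0.
have hlam : lam * dot r r <= qform R N A r.
  by have := Bge b; rewrite sqnormE !qformE hb -!dotM !mulmxA WW mul1mx.
have h0 := dot_ge0 (lam *: r - A *m v).
rewrite dotBl !dotBr !dotZl !dotZr (dotC (A *m v) r) in h0.
have hD : lam * qform R N A r <= dot (A *m v) (A *m v).
  have := ler_wpM2l (ltW lam_gt0) hlam; rewrite hs in hlam * => hh.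
  lra.
have hD' : qform R N A r <= dot (A *m v) (A *m v) / lam.
  by rewrite ler_pdivlMr // mulrC.
rewrite e2 split.
have hv : qform R N A v = qform R N A r + qform R Nc Ac c by rewrite {1}ev split.
have hAc : 0 <= qform R N A r by apply: le_trans hlam; rewrite mulr_ge0 ?dot_ge0 // ltW.
have : (1 - th2) * qform R N A r <= (1 - th2) * (dot (A *m v) (A *m v) / lam).
  by rewrite ler_wpM2l // subr_ge0.
nra.
Qed.
End Coarse.
Set Implicit Arguments. Unset Strict Implicit.

Section Lin.
Variable R : realType.

Lemma lin_sum (U V : lmodType R) (f : U -> V) :
  (forall a x y, f (a *: x + y) = a *: f x + f y) ->
  forall (I : finType) (c : I -> R) (x : I -> U),
  f (\sum_i c i *: x i) = \sum_i c i *: f (x i).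
Proof.
move=> hf I c x.
have f0 : f 0 = 0.
  have h := hf 1 0 0; rewrite scaler0 add0r scale1r in h.
  by apply: (addrI (f 0)); rewrite addr0 -h.
elim/big_rec2: _ => [//|i y1 y2 _ <-].
by rewrite hf.
Qed.

Lemma lin_sumR (U : lmodType R) (f : U -> R) :
  (forall a x y, f (a *: x + y) = a * f x + f y) ->
  forall (I : finType) (c : I -> R) (x : I -> U),
  f (\sum_i c i *: x i) = \sum_i c i * f (x i).
Proof.
move=> hf I c x.
have f0 : f 0 = 0.
  have h := hf 1 0 0; rewrite scaler0 add0r mul1r in h.
  by apply: (addrI (f 0)); rewrite addr0 -h.
elim/big_rec2: _ => [//|i y1 y2 _ <-].
by rewrite hf.
Qed.

Lemma sym_unit N (M : 'M[R]_N) (c : R) : 0 < c -> M^T = M ->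
  (forall x, c * sqnorm R N x <= qform R N M x) -> M \in unitmx.
Proof.
move=> c0 sM hM; rewrite unitmxE unitfE; apply/negP => /det0P [v nv hv].
have hx : M *m v^T = 0 by rewrite -sM -trmx_mul hv trmx0.
have := hM v^T; rewrite qformE hx dot0r.
have : 0 < sqnorm R N v^T by apply: sqnorm_gt0; rewrite trmx_eq0.
move=> h1 h2.
have : 0 < c * sqnorm R N v^T by rewrite mulr_gt0.
by rewrite ltNge h2.
Qed.
End Lin.

Unset Implicit Arguments.
Section Gam.
Variable R : realType.
Variables (V V0 Vs : lmodType R).
Variables (iV : V -> V0) (i0 : V0 -> Vs).
Variable ip0 : V0 -> V0 -> R.
Variable dual : Vs -> V -> R.
Variables (L : V -> Vs) (Linv : Vs -> V).
Variable n : nat -> nat.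
Variable phi : forall k, 'I_(n k) -> V0.
Variable pi : forall k, 'M[R]_(n k.-1, n k).
Hypothesis i0lin : forall (a : R) (x y : V0), i0 (a *: x + y) = a *: i0 x + i0 y.
Hypothesis dual1 : forall (a : R) (f g : Vs) (v : V), dual (a *: f + g) v = a * dual f v + dual g v.
Hypothesis dual2 : forall (a : R) (f : Vs) (v w : V), dual f (a *: v + w) = a * dual f v + dual f w.
Hypothesis Llin : forall (a : R) (u w : V), L (a *: u + w) = a *: L u + L w.
Hypothesis LK : cancel L Linv.
Hypothesis LinvK : cancel Linv L.
Hypothesis Lsym : forall u w : V, dual (L u) w = dual (L w) u.

Notation Th := (Theta R V V0 Vs i0 dual Linv n phi).

Lemma Linvlin (a : R) (f g : Vs) : Linv (a *: f + g) = a *: Linv f + Linv g.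
Proof. by rewrite -{1}(LinvK f) -{1}(LinvK g) -Llin LK. Qed.

Lemma Theta_sym k : (Th k)^T = Th k.
Proof.
apply/matrixP => i j; rewrite !mxE.
by rewrite -{1}(LinvK (i0 (phi k j))) -{2}(LinvK (i0 (phi k i))) Lsym.
Qed.

Lemma Theta_nest k : (forall i, phi k.-1 i = \sum_j pi k i j *: phi k j) ->
  Th k.-1 = pi k *m Th k *m (pi k)^T.
Proof.
move=> hphi; apply/matrixP => i j; rewrite !mxE hphi hphi.
rewrite !(lin_sum i0lin) (lin_sum Linvlin).
rewrite (lin_sumR (fun a f g => dual1 a f g _)).
under eq_bigr => a _ do rewrite (lin_sumR (fun a v w => dual2 a _ v w)).
under [RHS]eq_bigr => b _ do rewrite !mxE mulr_suml.
rewrite exchange_big /=; apply: eq_bigr => a _; rewrite mulr_sumr.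
by apply: eq_bigr => b _; rewrite !mxE; ring.
Qed.
End Gam.
Set Implicit Arguments. Unset Strict Implicit.

Lemma smooth_err (R : realType) N (A : 'M[R]_N) (Lam : R) (g zz z : 'cV_N) m :
  g = A *m zz ->
  zz - iter m (fun z => z + Lam^-1 *: (g - A *m z)) z = iter m (Sm A Lam) (zz - z).
Proof.
move=> hg; elim: m => [//|m IH]; rewrite !iterS -IH /Sm hg.
by rewrite -mulmxBr opprD addrA.
Qed.

Section Level.
Variable R : realType.
Variables N Nc Nw : nat.
Variable A : 'M[R]_N.
Variable Ac : 'M[R]_Nc.
Variable Rr P : 'M[R]_(Nc, N).
Variable Wm : 'M[R]_(Nw, N).
Variables lam Lam K th : R.
Variable m : nat.
Hypothesis lam_gt0 : 0 < lam.
Hypothesis Lam_gt0 : 0 < Lam.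
Hypothesis th0 : 0 < th.
Hypothesis th1 : th < 1.
Hypothesis Asym : A^T = A.
Hypothesis Au : A \in unitmx.
Hypothesis Ale : forall x, qform R N A x <= Lam * sqnorm R N x.
Hypothesis Age : forall x, 0 <= qform R N A x.
Hypothesis Acu : Ac \in unitmx.
Hypothesis Gal : Rr *m A *m Rr^T = Ac.
Hypothesis RA : Rr *m A = Ac *m P.
Hypothesis Ker : forall x : 'cV[R]_N, P *m x = 0 -> exists y, x = Wm^T *m y.
Hypothesis WW : Wm *m Wm^T = 1%:M.
Hypothesis Bge : forall b, lam * sqnorm R Nw b <= qform R Nw (Wm *m A *m Wm^T) b.
Hypothesis hK : lam^-1 <= K * Lam^-1.
Hypothesis hKm : K <= m%:R * th ^+ 2.

Lemma level_step (Q : 'cV[R]_Nc -> 'cV[R]_Nc) (g z0 : 'cV[R]_N) (F0 : 'cV[R]_N -> 'cV[R]_N) :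
  (forall g', qform R Nc Ac (invmx Ac *m g' - Q g') <= th ^+ 2 * qform R Nc Ac (invmx Ac *m g' - 0)) ->
  F0 = (fun z => z + Lam^-1 *: (g - A *m z)) ->
  qform R N A (invmx A *m g - iter m F0 (iter m F0 z0 + Rr^T *m Q (Rr *m (g - A *m iter m F0 z0))))
  <= th ^+ 2 * qform R N A (invmx A *m g - z0).
Proof.
move=> hQ ->; set F := (fun z => _); set z1 := iter m F z0.
set zz := invmx A *m g.
have hg : g = A *m zz by rewrite /zz mulKVmx.
rewrite /F smooth_err //.
apply: le_trans (smooth_iter_le Lam_gt0 Asym Ale Age _ _) _.
set e := zz - z0.
have hv : zz - z1 = iter m (Sm A Lam) e by rewrite /z1 /F smooth_err.
set v := iter m (Sm A Lam) e in hv.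
have hg' : Rr *m (g - A *m z1) = Rr *m (A *m v) by rewrite -hv [A *m (zz - z1)]mulmxBr -hg.
rewrite hg'.
have e2 : zz - (z1 + Rr^T *m Q (Rr *m (A *m v))) = v - Rr^T *m Q (Rr *m (A *m v)).
  by rewrite -hv opprD addrA.
rewrite e2.
have th21 : th ^+ 2 <= 1 by rewrite expr_le1 // ltW.
have hc := hQ (Rr *m (A *m v)); rewrite subr0 in hc.
have h1 := coarse_step lam_gt0 th21 Asym Acu Gal RA Ker WW Bge hc.
have h2 := smooth_iter Lam_gt0 Asym Ale Age m e.
rewrite -/v in h2.
set D := dot (A *m v) (A *m v) in h1 h2.
have D0 : 0 <= D by apply: dot_ge0.
have h3 : D / lam <= K * (D / Lam).
  by rewrite mulrCA ler_wpM2l.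
have h4 : K * (D / Lam) <= m%:R * th ^+ 2 * (D / Lam).
  by rewrite ler_wpM2r // divr_ge0 // ltW.
have h5 : (1 - th ^+ 2) * (D / lam) <= D / lam.
  have hx : 0 <= th ^+ 2 * (D / lam) by rewrite mulr_ge0 ?sqr_ge0 ?divr_ge0 // ltW.
  rewrite mulrBl mul1r; lra.
have h6 : th ^+ 2 * (m%:R * (D / Lam)) <= th ^+ 2 * (qform R N A e - qform R N A v).
  by rewrite ler_wpM2l ?sqr_ge0.
have e3 : m%:R * th ^+ 2 * (D / Lam) = th ^+ 2 * (m%:R * (D / Lam)) by ring.
lra.
Qed.
End Level.
Set Implicit Arguments. Unset Strict Implicit.
Unset Implicit Arguments.
Theorem theorem2 (R : realType) (C H : R) (hC : 0 < C) (hH0 : 0 < H) (hH1 : H < 1)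
  (theta : R) (ht0 : 0 < theta) (ht1 : theta < 1) :
  exists mhalf : nat,
  forall (V V0 Vs : lmodType R) (iV : V -> V0) (i0 : V0 -> Vs)
    (ip0 : V0 -> V0 -> R) (dual : Vs -> V -> R) (L : V -> Vs) (Linv : Vs -> V)
    (q : nat) (n : nat -> nat) (phi : forall k, 'I_(n k) -> V0)
    (pi : forall k, 'M[R]_(n k.-1, n k))
    (W : forall k, 'M[R]_(n k - n k.-1, n k)),
  (* ---- Gelfand triple V ⊂ V0 ⊂ V* ---- *)
  (forall (a : R) (x y : V), iV (a *: x + y) = a *: iV x + iV y) ->
  injective iV ->
  (forall (a : R) (x y : V0), i0 (a *: x + y) = a *: i0 x + i0 y) ->
  injective i0 ->
  (forall (a : R) (x y z : V0), ip0 (a *: x + y) z = a * ip0 x z + ip0 y z) ->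
  (forall x y : V0, ip0 x y = ip0 y x) ->
  (forall x : V0, x != 0 -> 0 < ip0 x x) ->
  (forall (a : R) (f g : Vs) (v : V), dual (a *: f + g) v = a * dual f v + dual g v) ->
  (forall (a : R) (f : Vs) (v w : V), dual f (a *: v + w) = a * dual f v + dual f w) ->
  (forall f : Vs, (forall v : V, dual f v = 0) -> f = 0) ->
  (forall (x : V0) (v : V), dual (i0 x) v = ip0 x (iV v)) ->
  (* ---- L : V -> V* symmetric positive linear bijection ---- *)
  (forall (a : R) (u w : V), L (a *: u + w) = a *: L u + L w) ->
  cancel L Linv -> cancel Linv L ->
  (forall u w : V, dual (L u) w = dual (L w) u) ->
  (forall u : V, u != 0 -> 0 < dual (L u) u) ->
  (* ---- gamblets: independence, well-conditioned mass matrices ---- *)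
  (forall k, (1 <= k <= q)%N -> forall x : 'cV[R]_(n k),
      \sum_i x i 0 *: phi k i = 0 -> x = 0) ->
  (forall k, (1 <= k <= q)%N -> forall x : 'cV[R]_(n k),
      C^-1 * sqnorm R (n k) x <= norm0 R V0 ip0 (\sum_i x i 0 *: phi k i) ^+ 2 /\
      norm0 R V0 ip0 (\sum_i x i 0 *: phi k i) ^+ 2 <= C * sqnorm R (n k) x) ->
  (* ---- nesting, pi k = pi^(k-1,k) ---- *)
  (forall k, (2 <= k <= q)%N ->
      (forall i, phi k.-1 i = \sum_j pi k i j *: phi k j) /\
      \rank (pi k) = n k.-1 /\ pi k *m (pi k)^T = 1%:M) ->
  (* ---- W^(k), k >= 2 ---- *)
  (forall k, (2 <= k <= q)%N ->
      (forall x : 'cV[R]_(n k), pi k *m x = 0 <-> exists y, x = (W k)^T *m y) /\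
      W k *m (W k)^T = 1%:M) ->
  (* ---- estimate (i) ---- *)
  (forall k, (1 <= k <= q)%N -> forall u : V,
      norm0 R V0 ip0 (iV (u - uproj R V V0 Vs i0 dual Linv n phi k u))
      <= C * H ^+ k * enorm R V Vs dual L (u - uproj R V V0 Vs i0 dual Linv n phi k u)) ->
  (forall k, (1 <= k <= q)%N -> forall (u : V) (f : V0), L u = i0 f ->
      enorm R V Vs dual L (u - uproj R V V0 Vs i0 dual Linv n phi k u)
      <= C * H ^+ k * norm0 R V0 ip0 f) ->
  (* ---- estimate (ii) ---- *)
  (let A1 := Amat R V V0 Vs i0 dual Linv n phi 1 in
   loewner_ge R (n 1) A1 C^-1 /\ loewner_le R (n 1) A1 (C * H ^- 2) /\
   Cond R (n 1) A1 <= C * H ^- 2) ->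
  (forall k, (2 <= k <= q)%N ->
   let B := Bmat R V V0 Vs i0 dual Linv n phi W k in
   loewner_ge R _ B (C^-1 * H ^- (2 * k.-1)) /\ loewner_le R _ B (C * H ^- (2 * k)) /\
   Cond R _ B <= C * H ^- 2) ->
  (forall k, (1 <= k <= q)%N ->
   loewner_ge R (n k) (Amat R V V0 Vs i0 dual Linv n phi k) C^-1 /\
   loewner_le R (n k) (Amat R V V0 Vs i0 dual Linv n phi k) (C * H ^- (2 * k))) ->
  (* ---- conclusion: MG with p = 1, m1 = m2 = mhalf (m = 2 mhalf) ---- *)
  forall k, (1 <= k <= q)%N -> forall g z0 : 'cV[R]_(n k),
  let A := Amat R V V0 Vs i0 dual Linv n phi in
  let z := invmx (A k) *m g in
  Anorm R (n k) (A k)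
    (z - MG R n A (Rmat R V V0 Vs i0 dual Linv n phi pi)
             (fun j => C * H ^- (2 * j)) mhalf mhalf 1 k z0 g)
  <= theta * Anorm R (n k) (A k) (z - z0).
Proof.
pose K := C ^+ 2 / H ^+ 2.
have K0 : 0 <= K by rewrite divr_ge0 ?sqr_ge0.
pose m := (Num.bound (K / theta ^+ 2)).+1.
have hKm : K <= m%:R * theta ^+ 2.
  have t2 : 0 < theta ^+ 2 by rewrite exprn_gt0.
  have := archi_boundP (divr_ge0 K0 (ltW t2)).
  rewrite ltr_pdivrMr // => h; apply: (le_trans (ltW h)).
  by rewrite ler_wpM2r ?ltW // ltr_nat.
exists m.
clearbody m.
move=> V V0 Vs iV i0 ip0 dual L Linv q n phi pi W _ _ hi0 _ _ _ _ hd1 hd2 _ _ hL LK LinvK Lsym _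
  _ _ hnest hW _ _ _ hB hA.
pose AA := Amat R V V0 Vs i0 dual Linv n phi.
pose Lm := (fun j : nat => C * H ^- (2 * j)).
pose Rm := Rmat R V V0 Vs i0 dual Linv n phi pi.
have Asym : forall k, (AA k)^T = AA k.
  by move=> k; rewrite /AA /Amat trmx_inv (Theta_sym R V V0 Vs i0 dual L Linv n phi LinvK Lsym).
have Age : forall k, (1 <= k <= q)%N -> forall x, 0 <= qform R (n k) (AA k) x.
  move=> k hk x; apply: le_trans (proj1 (hA k hk) x).
  by apply: mulr_ge0; [rewrite invr_ge0 ltW | exact: sqnorm_ge0].
have Au : forall k, (1 <= k <= q)%N -> AA k \in unitmx.
  move=> k hk; apply: (sym_unit (c := C^-1)); rewrite ?invr_gt0 //.
  exact: (proj1 (hA k hk)).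
have Thu : forall k, (1 <= k <= q)%N -> Theta R V V0 Vs i0 dual Linv n phi k \in unitmx.
  by move=> k hk; rewrite -unitmx_inv; apply: Au.
have main : forall k, (1 <= k <= q)%N -> forall g z0 : 'cV[R]_(n k),
   qform R (n k) (AA k) (invmx (AA k) *m g - MG R n AA Rm Lm m m 1 k z0 g)
   <= theta ^+ 2 * qform R (n k) (AA k) (invmx (AA k) *m g - z0).
  elim=> [//|k IH] hk g z0.
  case: (eqVneq k 0%N) => [k0|knz].
    subst k; rewrite /= subrr qformE mulmx0 dot0r.
    by apply: mulr_ge0; [exact: sqr_ge0 | exact: Age].
  have hk' : (1 <= k <= q)%N by case/andP: hk => _ h; rewrite lt0n knz ltnW.
  rewrite [MG _ _ _ _ _ _ _ _ k.+1 _ _]/= (negPf knz).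
  have h2 : (1 < k.+1 <= q)%N by rewrite ltnS lt0n knz (andP hk).2.
  have RA : Rm k.+1 *m AA k.+1 = AA k *m pi k.+1.
    by rewrite /Rm /Rmat /AA /Amat -mulmxA mulmxV ?mulmx1 //; apply: Thu.
  have nest := Theta_nest R V V0 Vs i0 dual L Linv n phi pi hi0 hd1 hd2 hL LK LinvK k.+1 (proj1 (hnest _ h2)).
  have Gal : Rm k.+1 *m AA k.+1 *m (Rm k.+1)^T = AA k.
    rewrite RA /Rm /Rmat !trmx_mul (Asym k) (Theta_sym R V V0 Vs i0 dual L Linv n phi LinvK Lsym).
    rewrite !mulmxA -(mulmxA (AA k)) -(mulmxA (AA k)) -nest.
    by rewrite /AA /Amat mulVmx ?mul1mx //; apply: Thu.
  have [hker WW] := hW _ h2.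
  have Ker : forall x : 'cV[R]_(n k.+1), pi k.+1 *m x = 0 -> exists y, x = (W k.+1)^T *m y.
    by move=> x /(hker x).
  have Bge := proj1 (hB _ h2).
  have Cn : C != 0 by rewrite gt_eqF.
  have Hn : H != 0 by rewrite gt_eqF.
  have hK : (C^-1 / H ^+ (2 * k))^-1 <= K * (Lm k.+1)^-1.
    rewrite /Lm /K mulnS exprD le_eqVlt; apply/orP; left; apply/eqP.
    by field; rewrite expf_neq0 // Hn Cn.
  have lam0 : 0 < C^-1 / H ^+ (2 * k).
    by rewrite divr_gt0 ?invr_gt0 ?exprn_gt0.
  have Lam0 : 0 < Lm k.+1.
    by rewrite /Lm mulr_gt0 ?invr_gt0 ?exprn_gt0.
  refine (@level_step R (n k.+1) (n k) (n k.+1 - n k.+1.-1) (AA k.+1) (AA k) (Rm k.+1) (pi k.+1) (W k.+1)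
     (C^-1 / H ^+ (2 * k)) (Lm k.+1) K theta m lam0 Lam0 ht0 ht1 (Asym _) (Au _ hk)
     (proj2 (hA _ hk)) (Age _ hk) (Au _ hk') Gal RA Ker WW Bge hK hKm
     (fun g' => MG R n AA Rm Lm m m 1 k 0 g') g z0 _ _ erefl).
  by move=> g'; apply: IH.
move=> k hk g z0 /=.
have h := main k hk g z0.
rewrite /Anorm -(ger0_norm (ltW ht0)) -sqrtr_sqr -sqrtrM ?sqr_ge0 //.
exact: ler_wsqrtr.
Qed.
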